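(* Let $G$ be a locally nilpotent group and $A$ a normal abelian subgroup of $G$ with $G/A$ finite. Suppose that $G$ has a proper contranormal subgroup $C$. Then there exist a subgroup $B\le A$ which is normal in $G$ and a finitely generated subgroup $K$ with $G=AK$ such that $C=BK$ and $A=B[K,A]$. In particular, the factor group $G/B$ has the finite contranormal subgroup $KB/B$.
   Context: A subgroup $H$ of a group $G$ is called contranormal in $G$ if $H^G = G$, where $H^G$ denotes the normal closure of $H$ in $G$ (the smallest normal subgroup of $G$ containing $H$). *)

(* Defs.v *)
From Stdlib Require Import List.
Import ListNotations.

Record Group := {
  carrier :> Type;
  gmul : carrier -> carrier -> carrier;
  gone : carrier;
  ginv : carrier -> carrier;
  gmulA : forall x y z, gmul x (gmul y z) = gmul (gmul x y) z;
  gmul1 : forall x, gmul gone x = x;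
  gmulV : forall x, gmul (ginv x) x = gone
}.

Section Defs.
Variable G : Group.

Definition subset (X Y : G -> Prop) : Prop := forall x, X x -> Y x.
Definition seteq (X Y : G -> Prop) : Prop := forall x, X x <-> Y x.

Definition is_subgroup (H : G -> Prop) : Prop :=
  H (gone G) /\ (forall x y, H x -> H y -> H (gmul G x y)) /\
  (forall x, H x -> H (ginv G x)).

Definition conj (x g : G) : G := gmul G (ginv G g) (gmul G x g).

Definition comm (x y : G) : G :=
  gmul G (ginv G x) (gmul G (ginv G y) (gmul G x y)).

Definition is_normal (N : G -> Prop) : Prop :=
  is_subgroup N /\ forall x g, N x -> N (conj x g).

Definition gen (S : G -> Prop) : G -> Prop :=
  fun x => forall H, is_subgroup H -> subset S H -> H x.

Definition normal_closure (H : G -> Prop) : G -> Prop :=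
  fun x => forall N, is_normal N -> subset H N -> N x.

Definition contranormal (H : G -> Prop) : Prop :=
  is_subgroup H /\ forall x, normal_closure H x.

Definition proper (H : G -> Prop) : Prop := exists x, ~ H x.

Definition comm_subgroup (X Y : G -> Prop) : G -> Prop :=
  gen (fun z => exists x y, X x /\ Y y /\ z = comm x y).

Fixpoint lcs (H : G -> Prop) (n : nat) : G -> Prop :=
  match n with
  | 0 => H
  | S m => comm_subgroup (lcs H m) H
  end.

Definition nilpotent (H : G -> Prop) : Prop :=
  exists n, forall x, lcs H n x -> x = gone G.

Definition finitely_generated (K : G -> Prop) : Prop :=
  exists s : list G, seteq K (gen (fun x => In x s)).

Definition locally_nilpotent : Prop :=
  forall s : list G, nilpotent (gen (fun x => In x s)).

Definition abelian (A : G -> Prop) : Prop :=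
  forall x y, A x -> A y -> gmul G x y = gmul G y x.

Definition setmul (X Y : G -> Prop) : G -> Prop :=
  fun z => exists x y, X x /\ Y y /\ z = gmul G x y.

(* X is covered by finitely many (left) cosets rN of N, i.e. XN/N is finite
   (for X a subgroup containing N: the index |X : N| is finite) *)
Definition finitely_many_cosets (X N : G -> Prop) : Prop :=
  exists s : list G, forall x, X x -> exists r, In r s /\ N (gmul G (ginv G r) x).

Definition finite_index (A : G -> Prop) : Prop :=
  finitely_many_cosets (fun _ => True) A.

End Defs.

(* Main.v *)
Require Import Defs.
From Stdlib Require Import List Lia PeanoNat.
Import ListNotations.

Lemma mulVg_r (G : Group) (x y : G) : gmul G (ginv G x) (gmul G x y) = y.
Proof. rewrite gmulA, gmulV, gmul1. reflexivity. Qed.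

Lemma mulgV (G : Group) (x : G) : gmul G x (ginv G x) = gone G.
Proof.
  rewrite <- (gmul1 G (gmul G x (ginv G x))).
  rewrite <- (gmulV G (ginv G x)) at 1.
  rewrite <- (gmulA G (ginv G (ginv G x))).
  rewrite (mulVg_r G x (ginv G x)). apply gmulV.
Qed.

Lemma mulg1 (G : Group) (x : G) : gmul G x (gone G) = x.
Proof. rewrite <- (gmulV G x), gmulA, mulgV, gmul1. reflexivity. Qed.

Lemma mulgVr (G : Group) (x y : G) : gmul G x (gmul G (ginv G x) y) = y.
Proof. rewrite gmulA, mulgV, gmul1. reflexivity. Qed.

Lemma inv_uniq (G : Group) (x y : G) : gmul G x y = gone G -> ginv G x = y.
Proof. intros H. rewrite <- (mulVg_r G x y), H, mulg1. reflexivity. Qed.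

Lemma invgK (G : Group) (x : G) : ginv G (ginv G x) = x.
Proof. apply inv_uniq. apply gmulV. Qed.

Lemma invMg (G : Group) (x y : G) : ginv G (gmul G x y) = gmul G (ginv G y) (ginv G x).
Proof. apply inv_uniq. rewrite <- gmulA, mulgVr, mulgV. reflexivity. Qed.

Lemma inv1 (G : Group) : ginv G (gone G) = gone G.
Proof. apply inv_uniq. apply gmul1. Qed.

Hint Rewrite <- gmulA : grp.
Hint Rewrite gmul1 mulg1 gmulV mulgV mulVg_r mulgVr invgK invMg inv1 : grp.

Ltac grp := unfold conj, comm; autorewrite with grp; try reflexivity.

Section Basics.

Lemma sg_one G X : is_subgroup G X -> X (gone G).
Proof. intros [h _]; exact h. Qed.
Lemma sg_mul G X x y : is_subgroup G X -> X x -> X y -> X (gmul G x y).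
Proof. intros [_ [h _]]; auto. Qed.
Lemma sg_inv G X x : is_subgroup G X -> X x -> X (ginv G x).
Proof. intros [_ [_ h]]; auto. Qed.
Lemma sg_conj G X x g : is_subgroup G X -> X x -> X g -> X (conj G x g).
Proof. intros HS hx hg. unfold conj. apply sg_mul; auto. apply sg_inv; auto.
  apply sg_mul; auto. Qed.

Lemma gen_sub G S : is_subgroup G (gen G S).
Proof.
  split; [|split].
  - intros H HS _. exact (sg_one _ _ HS).
  - intros x y hx hy H HS HSub. apply (sg_mul _ _ _ _ HS); [apply hx|apply hy]; auto.
  - intros x hx H HS HSub. apply (sg_inv _ _ _ HS); apply hx; auto.
Qed.
Lemma gen_incl G S : subset G S (gen G S).
Proof. intros x hx H HS HSub. auto. Qed.
Lemma gen_min G S H : is_subgroup G H -> subset G S H -> subset G (gen G S) H.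
Proof. intros HS HSub x hx. apply hx; auto. Qed.

Lemma conj_mul (G : Group) (x y g : G) : conj G (gmul G x y) g = gmul G (conj G x g) (conj G y g).
Proof. grp. Qed.

Lemma setmul_normal_sub G N H : is_normal G N -> is_subgroup G H -> is_subgroup G (setmul G N H).
Proof.
  intros [NS Nc] HS. split; [|split].
  - exists (gone G), (gone G). split; [apply sg_one; auto|split; [apply sg_one; auto|]].
    rewrite gmul1; reflexivity.
  - intros x y [n [h [hn [hh ->]]]] [n' [h' [hn' [hh' ->]]]].
    exists (gmul G n (conj G n' (ginv G h))), (gmul G h h').
    split; [apply sg_mul; auto|split; [apply sg_mul; auto|]]. grp.
  - intros x [n [h [hn [hh ->]]]].
    exists (conj G (ginv G n) h), (ginv G h).
    split; [apply Nc; apply sg_inv; auto|split; [apply sg_inv; auto|]]. grp.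
Qed.

Definition Nz (G : Group) (X : G -> Prop) : G -> Prop :=
  fun g => forall x, X x -> X (conj G x g) /\ X (conj G x (ginv G g)).

Fixpoint Nseq (G : Group) (H : G -> Prop) (k : nat) : G -> Prop :=
  match k with 0 => H | S k => Nz G (Nseq G H k) end.

Lemma Nz_sub G X : is_subgroup G X -> is_subgroup G (Nz G X).
Proof.
  intros HS. split; [|split].
  - intros x hx. assert (E : conj G x (gone G) = x) by grp.
    rewrite inv1, E. auto.
  - intros g h Hg Hh x hx. split.
    + replace (conj G x (gmul G g h)) with (conj G (conj G x g) h) by grp.
      apply Hh. apply Hg. exact hx.
    + replace (conj G x (ginv G (gmul G g h))) with (conj G (conj G x (ginv G h)) (ginv G g)) by grp.
      apply Hg. apply Hh. exact hx.
  - intros g Hg x hx. rewrite invgK. split; apply Hg; auto.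
Qed.

Lemma Nz_incl G X : is_subgroup G X -> subset G X (Nz G X).
Proof. intros HS g hg x hx. split; apply sg_conj; auto. apply sg_inv; auto. Qed.

Lemma Nseq_sub G H k : is_subgroup G H -> is_subgroup G (Nseq G H k).
Proof. intros HS. induction k; simpl; auto. apply Nz_sub; auto. Qed.

Lemma Nseq_mono G H k : is_subgroup G H -> subset G H (Nseq G H k).
Proof. intros HS. induction k; simpl; intros x hx; auto.
  apply Nz_incl; auto. apply Nseq_sub; auto. Qed.

Lemma AC_all G A C : locally_nilpotent G -> is_normal G A -> finite_index G A ->
  contranormal G C -> forall g, setmul G A C g.
Proof.
  intros LN AN [s Hs] [Csub Ccn].
  pose proof AN as [Asub An].
  set (H := setmul G A C).
  assert (HS : is_subgroup G H) by (apply setmul_normal_sub; auto).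
  set (F := gen G (fun x => In x s)).
  destruct (LN s) as [n Hn].
  assert (Hsub : forall k, is_subgroup G (Nseq G H k)) by (intros; apply Nseq_sub; auto).
  assert (AinN : forall k, subset G A (Nseq G H k)).
  { intros k a ha. apply Nseq_mono; auto. exists a, (gone G).
    split; auto. split. apply sg_one; auto. rewrite mulg1; auto. }
  assert (Hlcs : forall m, is_subgroup G (lcs G F m)) by (destruct m; apply gen_sub).
  assert (Hdec : forall y, exists r a, In r s /\ A a /\ y = gmul G r a).
  { intros y. destruct (Hs y I) as [r [hr ha]]. exists r, (gmul G (ginv G r) y).
    split; auto. split; auto. grp. }
  assert (step : forall k m, k + m = n -> subset G (lcs G F m) (Nseq G H k)).
  { induction k; intros m Hkm x hx.
    - simpl in Hkm; subst m. simpl. apply Hn in hx. subst x. apply sg_one; auto.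
    - assert (IH' := IHk (S m) ltac:(lia)).
      simpl. intros y hy.
      assert (key : forall x', lcs G F m x' -> Nseq G H k (conj G y x')).
      { intros x' hx'. destruct (Hdec y) as [r [a [hr [ha Ey]]]].
        assert (hrN : Nseq G H k r).
        { replace r with (gmul G y (ginv G a)) by (rewrite Ey; grp).
          apply sg_mul; auto. apply sg_inv; auto. apply AinN; auto. }
        rewrite Ey, conj_mul. apply sg_mul; auto.
        - replace (conj G r x') with (gmul G r (ginv G (comm G x' r))) by grp.
          apply sg_mul; auto. apply sg_inv; auto. apply IH'. simpl.
          apply gen_incl. exists x', r. split; auto. split; auto.
          apply gen_incl. exact hr.
        - apply AinN. apply An. auto. }
      split; apply key; auto. apply sg_inv; auto. }
  assert (Nn_all : forall g, Nseq G H n g).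
  { intros g. destruct (Hdec g) as [r [a [hr [ha ->]]]]. apply sg_mul; auto.
    apply (step n 0 ltac:(lia)). simpl. apply gen_incl. exact hr. apply AinN; auto. }
  assert (down : forall j k, (forall g, Nseq G H (j + k) g) -> forall g, Nseq G H k g).
  { induction j; intros k Hall g.
    - exact (Hall g).
    - assert (Hk1 : forall g, Nseq G H (S k) g).
      { apply IHj. rewrite <- plus_n_Sm. exact Hall. }
      apply (Ccn g (Nseq G H k)).
      + split; auto. intros x g' hx. exact (proj1 (Hk1 g' x hx)).
      + intros c hc. apply Nseq_mono; auto. exists (gone G), c.
        split; [apply sg_one; auto|split; auto]. rewrite gmul1; auto. }
  intros g. apply (down n 0). rewrite Nat.add_0_r. exact Nn_all.
Qed.

Lemma choose_list {T : Type} (P : T -> Prop) (Q : T -> T -> Prop) (s : list T) :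
  (forall r, In r s -> exists c, P c /\ Q r c) ->
  exists t, (forall c, In c t -> P c) /\ forall r, In r s -> exists c, In c t /\ Q r c.
Proof.
  induction s as [|a s IH]; intros Hs.
  - exists []. split; intros ? []. 
  - destruct (Hs a (or_introl eq_refl)) as [c [hc hq]].
    destruct IH as [t [ht1 ht2]]. { intros r hr. apply Hs. right; auto. }
    exists (c :: t). split.
    + intros c' [<-|h]; auto.
    + intros r [<-|h].
      * exists c. split; [left|]; auto.
      * destruct (ht2 r h) as [c' [h1 h2]]. exists c'. split; [right|]; auto.
Qed.

End Basics.

Theorem propositionB (G : Group) (A C : G -> Prop) :
  locally_nilpotent G ->
  is_normal G A -> abelian G A -> finite_index G A ->
  contranormal G C -> proper G C ->
  exists (B K : G -> Prop),
    is_normal G B /\ subset G B A /\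
    is_subgroup G K /\ finitely_generated G K /\
    (forall g : G, setmul G A K g) /\
    seteq G C (setmul G B K) /\
    seteq G A (setmul G B (comm_subgroup G K A)) /\
    (* "in particular": KB/B is a finite contranormal subgroup of G/B,
       expressed through the correspondence theorem on preimages in G *)
    finitely_many_cosets G (setmul G K B) B /\
    contranormal G (setmul G K B).
Proof.
  intros LN AN Aab FI CC _.
  pose proof (AC_all G A C LN AN FI CC) as ACall.
  destruct AN as [Asub An]. destruct CC as [Csub Ccn]. destruct FI as [s Hs].
  destruct (choose_list C (fun r c => A (gmul G (ginv G c) r)) s) as [t [Ht1 Ht2]].
  { intros r _. destruct (ACall r) as [a [c [ha [hc ->]]]]. exists c. split; auto.
    replace (gmul G (ginv G c) (gmul G a c)) with (conj G a c) by grp. auto. }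
  assert (reps : forall g, exists c, In c t /\ C c /\ A (gmul G (ginv G c) g)).
  { intros g. destruct (Hs g I) as [r [hr ha]]. destruct (Ht2 r hr) as [c [hc hca]].
    exists c. split; auto. split; auto.
    replace (gmul G (ginv G c) g) with (gmul G (gmul G (ginv G c) r) (gmul G (ginv G r) g)) by grp.
    apply sg_mul; auto. }
  set (B := fun x => C x /\ A x).
  set (K := gen G (fun x => In x t)).
  assert (KS : is_subgroup G K) by apply gen_sub.
  assert (KC : subset G K C) by (apply gen_min; auto).
  assert (comm_A : forall x a, A x -> A a -> conj G x a = x).
  { intros x a hx ha. unfold conj. rewrite (Aab x a hx ha). grp. }
  assert (BN : is_normal G B).
  { split.
    - split; [|split].
      + split; apply sg_one; auto.
      + intros x y [h1 h2] [h3 h4]. split; apply sg_mul; auto.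
      + intros x [h1 h2]. split; apply sg_inv; auto.
    - intros x g [h1 h2]. destruct (ACall g) as [a [c [ha [hc ->]]]].
      replace (conj G x (gmul G a c)) with (conj G (conj G x a) c) by grp.
      rewrite (comm_A x a h2 ha). split. apply sg_conj; auto. apply An; auto. }
  assert (AK : forall g, setmul G A K g).
  { intros g. destruct (reps g) as [c [hc [hcc ha]]].
    exists (conj G (gmul G (ginv G c) g) (ginv G c)), c.
    split; [apply An; auto|split; [apply gen_incl; auto|]]. grp. }
  assert (CBK : seteq G C (setmul G B K)).
  { intros x. split.
    - intros hx. destruct (reps x) as [c [hc [hcc ha]]].
      exists (conj G (gmul G (ginv G c) x) (ginv G c)), c.
      split; [split|split; [apply gen_incl; auto|]].
      + apply sg_conj; auto. apply sg_mul; auto; apply sg_inv; auto. apply sg_inv; auto.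
      + apply An; auto.
      + grp.
    - intros [b [k [[hb _] [hk ->]]]]. apply sg_mul; auto. }
  set (D := comm_subgroup G K A).
  assert (DS : is_subgroup G D) by apply gen_sub.
  assert (DA : subset G D A).
  { apply gen_min; auto. intros z [k [a [hk [ha ->]]]].
    replace (comm G k a) with (gmul G (conj G (ginv G a) k) a) by grp.
    apply sg_mul; auto. apply An. apply sg_inv; auto. }
  assert (Dconj : forall d k, D d -> K k -> D (conj G d k)).
  { intros d k hd hk.
    replace (conj G d k) with (gmul G d (ginv G (comm G k d))) by grp.
    apply sg_mul; auto. apply sg_inv; auto. apply gen_incl. exists k, d; auto. }
  set (E := setmul G B D).
  assert (ES : is_subgroup G E) by (apply setmul_normal_sub; auto).
  assert (EA : subset G E A).
  { intros x [b [d [[_ hb] [hd ->]]]]. apply sg_mul; auto. }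
  assert (DE : forall z, D z -> E z).
  { intros z hz. exists (gone G), z. split; [apply sg_one; apply BN|split; auto].
    rewrite gmul1; auto. }
  assert (BE : forall z, B z -> E z).
  { intros z hz. exists z, (gone G). split; auto. split; [apply sg_one; auto|].
    rewrite mulg1; auto. }
  assert (EN : is_normal G E).
  { split; auto. intros x g [b [d [hb [hd ->]]]]. rewrite conj_mul.
    apply sg_mul; auto.
    - apply BE. apply BN; auto.
    - destruct (AK g) as [a [k [ha [hk ->]]]].
      replace (conj G d (gmul G a k)) with (conj G (conj G d a) k) by grp.
      rewrite (comm_A d a (DA d hd) ha). apply DE, Dconj; auto. }
  set (M := setmul G E K).
  assert (MS : is_subgroup G M) by (apply setmul_normal_sub; auto).
  assert (EM : forall z, E z -> M z).
  { intros z hz. exists z, (gone G). split; auto. split; [apply sg_one; auto|].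
    rewrite mulg1; auto. }
  assert (KM : forall z, K z -> M z).
  { intros z hz. exists (gone G), z. split; [apply sg_one; auto|split; auto].
    rewrite gmul1; auto. }
  assert (MN : is_normal G M).
  { split; auto. intros x g [e [k [he [hk ->]]]]. rewrite conj_mul.
    apply sg_mul; auto.
    - apply EM. apply EN; auto.
    - destruct (AK g) as [a [k' [ha [hk' ->]]]].
      replace (conj G k (gmul G a k')) with
        (gmul G (conj G k k') (conj G (comm G k a) k')) by grp.
      apply sg_mul; auto.
      + apply KM. apply sg_conj; auto.
      + apply EM, DE. apply Dconj; auto. apply gen_incl. exists k, a; auto. }
  assert (Mall : forall g, M g).
  { intros g. apply (Ccn g M MN). intros c hc.
    destruct (proj1 (CBK c) hc) as [b [k [hb [hk ->]]]].
    exists b, k. split; auto. }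
  assert (AE : forall a, A a -> E a).
  { intros a ha. destruct (Mall a) as [e [k [he [hk Ea]]]].
    assert (hkA : A k).
    { replace k with (gmul G (ginv G e) a) by (rewrite Ea; grp).
      apply sg_mul; auto. apply sg_inv; auto. }
    rewrite Ea. apply sg_mul; auto. apply BE. split; auto. }
  assert (KBC : forall x, setmul G K B x <-> C x).
  { intros x. split.
    - intros [k [b [hk [[hb _] ->]]]]. apply sg_mul; auto.
    - intros hx. destruct (proj1 (CBK x) hx) as [b [k [hb [hk ->]]]].
      exists k, (conj G b k). split; auto. split; [apply BN; auto|]. grp. }
  exists B, K.
  split; [exact BN|]. split; [intros x [_ h]; exact h|].
  split; [exact KS|]. split; [exists t; intros x; split; auto|].
  split; [exact AK|]. split; [exact CBK|].
  split; [intros x; split; [apply AE|apply EA]|].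
  split.
  - exists t. intros x hx. apply KBC in hx. destruct (reps x) as [c [hc [hcc ha]]].
    exists c. split; auto. split; auto. apply sg_mul; auto. apply sg_inv; auto.
  - split.
    + split; [|split].
      * apply KBC. apply sg_one; auto.
      * intros x y hx hy. apply KBC. apply KBC in hx. apply KBC in hy. apply sg_mul; auto.
      * intros x hx. apply KBC. apply KBC in hx. apply sg_inv; auto.
    + intros x N HN HNs. apply (Ccn x N HN). intros c hc. apply HNs. apply KBC; auto.
Qed.
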